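(* Let $m,k\in\mathbb{Z}$, let $(H,\alpha)$ be a monoidal Hom-bialgebra and $(C,\beta)$ a monoidal Hom-algebra which is a left weak $(H,\alpha)$-Hom-module algebra via $h\otimes c\mapsto h\rightarrow c$ and a left $(H,\alpha)$-Hom-comodule coalgebra with coaction $c\mapsto c_{(-1)}\otimes c_{(0)}$; let $\sigma:H\otimes H\to C$ be a convolution invertible linear map. Let $X=C\otimes H$ with multiplication $(a\otimes h)(b\otimes g)=a[(\alpha^{m}(h_{11})\rightarrow\beta^{-2}(b))\sigma(\alpha^{k+1}(h_{12}),\alpha^{k}(g_{1}))]\otimes\alpha(h_{2}g_{2})$, unit $1_C\otimes1_H$, comultiplication $\Delta(a\otimes h)=a_{1}\otimes\alpha^{m}(a_{2(-1)})\alpha^{-1}(h_{1})\otimes\beta(a_{2(0)})\otimes h_{2}$, counit $\varepsilon(a)\varepsilon(h)$ and structure map $\xi=\beta\otimes\alpha$, and assume $(X,\xi)$ is a monoidal Hom-bialgebra. Define $\varphi^l:H\otimes X\to X$ and $\varphi^r:X\otimes H\to X$ by $$\varphi^{l}(l\otimes(a\otimes h))=(\alpha(l_{11})\rightarrow\beta^{-1}(a))\,\sigma(\alpha^{k+2-m}(l_{12}),\alpha^{k+1}(h_{1}))\otimes\alpha^{1-m}(l_{2})\alpha(h_{2}),$$ $$\varphi^{r}((a\otimes h)\otimes l)=a\,\sigma(\alpha^{k+1}(h_{1}),\alpha^{k+1-m}(l_{1}))\otimes\alpha(h_{2})\alpha^{1-m}(l_{2}).$$ Then $(X,\xi,\varphi^l,\varphi^r)$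 is a weak $(H,\alpha)$ Hom-bimodule, i.e. for all $l,g\in H$, $x\in X$: $\varphi^l(1_H\otimes x)=\xi(x)=\varphi^r(x\otimes1_H)$ and $\varphi^l(\alpha(l)\otimes\varphi^r(x\otimes g))=\varphi^r(\varphi^l(l\otimes x)\otimes\alpha(g))$.
   Context: Field $k$; Sweedler notation. Monoidal Hom-algebra $(A,\beta)$: $\beta(a)(bc)=(ab)\beta(c)$, $\beta(ab)=\beta(a)\beta(b)$, $a1=1a=\beta(a)$, $\beta(1)=1$, $\beta$ a linear automorphism. Monoidal Hom-coalgebra $(C,\gamma)$: $\gamma^{-1}(c_1)\otimes\Delta(c_2)=\Delta(c_1)\otimes\gamma^{-1}(c_2)$, $\Delta\gamma=(\gamma\otimes\gamma)\Delta$, $c_1\varepsilon(c_2)=\gamma^{-1}(c)=\varepsilon(c_1)c_2$, $\varepsilon\gamma=\varepsilon$. Monoidal Hom-bialgebra: both with the same structure map and $\Delta,\varepsilon$ multiplicative and unital. Left weak $(H,\alpha)$-Hom-module algebra: $h\rightarrow(ab)=(h_1\rightarrow a)(h_2\rightarrow b)$, $h\rightarrow1=\varepsilon(h)1$. Left $(H,\alpha)$-Hom-comodule $(M,\mu)$: $\Delta_H(x_{(-1)})\otimes\mu^{-1}(x_{(0)})=\alpha^{-1}(x_{(-1)})\otimes x_{(0)(-1)}\otimes x_{(0)(0)}$, $\rho(\mu(x))=\alpha(x_{(-1)})\otimes\mu(x_{(0)})$, $\varepsilon(x_{(-1)})x_{(0)}=\mu^{-1}(x)$; Hom-comodule coalgebra: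 moreover $b_{(-1)}\otimes b_{(0)1}\otimes b_{(0)2}=b_{1(-1)}b_{2(-1)}\otimes b_{1(0)}\otimes b_{2(0)}$, $\varepsilon(b_{(0)})b_{(-1)}=\varepsilon(b)1_H$. $\sigma$ convolution invertible means there is a linear $\sigma^{-1}:H\otimes H\to C$ with $\sigma(h_1,l_1)\sigma^{-1}(h_2,l_2)=\varepsilon(h)\varepsilon(l)1_C=\sigma^{-1}(h_1,l_1)\sigma(h_2,l_2)$. *)

(* Defs.v *)
(* An element of V (x) W is represented by a finite list of simple tensors
   [t : seq (V * W)] (meaning  sum_i t_i.1 (x) t_i.2); two such lists denote
   the same tensor iff they agree on all product functionals f (x) g with
   f, g linear forms (over a field these separate the points of V (x) W).
   Higher tensor powers are tested the same way with products of n linear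
   forms.  Linear maps V -> W (x) W' (comultiplications, coactions) are
   functions V -> seq (W * W') whose pairing with every product functional
   is a linear form. *)
From mathcomp Require Import all_boot all_algebra.
Set Implicit Arguments.
Unset Strict Implicit.
Unset Printing Implicit Defensive.
Import GRing.Theory.
Local Open Scope ring_scope.

Definition zit {V : Type} (f fi : V -> V) (n : int) : V -> V :=
  match n with Posz n => iter n f | Negz n => iter n.+1 fi end.

Section Basic.
Variable F : fieldType.

Definition lin_aut (V : lmodType F) (f fi : V -> V) :=
  [/\ linear f, cancel f fi & cancel fi f].

(* a linear map U (x) V -> W, given as a bilinear map *)
Definition bilinear_map (U V W : lmodType F) (f : U -> V -> W) :=
  (forall u, linear (f u)) /\ (forall v, linear (f^~ v)).

Definition tensor_linear (U V W : lmodType F) (D : U -> seq (V * W)) :=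
  forall (f : V -> F) (g : W -> F), scalar f -> scalar g ->
    scalar (fun u => \sum_(p <- D u) f p.1 * g p.2).

Record hom_algebra (A : lmodType F) (mul : A -> A -> A) (one : A)
    (b bi : A -> A) : Prop := {
  ha_aut : lin_aut b bi;
  ha_mul : bilinear_map mul;
  ha_assoc : forall x y z, mul (b x) (mul y z) = mul (mul x y) (b z);
  ha_morph : forall x y, b (mul x y) = mul (b x) (b y);
  ha_unitr : forall x, mul x one = b x;
  ha_unitl : forall x, mul one x = b x;
  ha_one : b one = one }.

Record hom_coalgebra (C : lmodType F) (D : C -> seq (C * C)) (e : C -> F)
    (g gi : C -> C) : Prop := {
  hc_aut : lin_aut g gi;
  hc_cop : tensor_linear D;
  hc_eps : scalar e;
  hc_coassoc : forall c (f1 f2 f3 : C -> F), scalar f1 -> scalar f2 -> scalar f3 ->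
    \sum_(p <- D c) \sum_(q <- D p.2) f1 (gi p.1) * f2 q.1 * f3 q.2
    = \sum_(p <- D c) \sum_(q <- D p.1) f1 q.1 * f2 q.2 * f3 (gi p.2);
  hc_copmorph : forall c (f1 f2 : C -> F), scalar f1 -> scalar f2 ->
    \sum_(p <- D (g c)) f1 p.1 * f2 p.2 = \sum_(p <- D c) f1 (g p.1) * f2 (g p.2);
  hc_counitr : forall c, \sum_(p <- D c) e p.2 *: p.1 = gi c;
  hc_counitl : forall c, \sum_(p <- D c) e p.1 *: p.2 = gi c;
  hc_epsmorph : forall c, e (g c) = e c }.

Record hom_bialgebra (H : lmodType F) (mul : H -> H -> H) (one : H)
    (D : H -> seq (H * H)) (e : H -> F) (a ai : H -> H) : Prop := {
  hb_alg : hom_algebra mul one a ai;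
  hb_coalg : hom_coalgebra D e a ai;
  hb_copmul : forall x y (f1 f2 : H -> F), scalar f1 -> scalar f2 ->
    \sum_(p <- D (mul x y)) f1 p.1 * f2 p.2
    = \sum_(p <- D x) \sum_(q <- D y) f1 (mul p.1 q.1) * f2 (mul p.2 q.2);
  hb_copone : forall (f1 f2 : H -> F), scalar f1 -> scalar f2 ->
    \sum_(p <- D one) f1 p.1 * f2 p.2 = f1 one * f2 one;
  hb_epsmul : forall x y, e (mul x y) = e x * e y;
  hb_epsone : e one = 1 }.

Record weak_module_algebra (H C : lmodType F) (DH : H -> seq (H * H))
    (eH : H -> F) (mulC : C -> C -> C) (oneC : C) (act : H -> C -> C) : Prop := {
  wm_lin : bilinear_map act;
  wm_mul : forall h a b, act h (mulC a b) = \sum_(p <- DH h) mulC (act p.1 a) (act p.2 b);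
  wm_one : forall h, act h oneC = eH h *: oneC }.

(* left (H, a)-Hom-comodule (M, mu), coaction rho x = x_(-1) (x) x_(0) *)
Record hom_comodule (H M : lmodType F) (DH : H -> seq (H * H)) (eH : H -> F)
    (a ai : H -> H) (rho : M -> seq (H * M)) (mu mui : M -> M) : Prop := {
  cm_aut : lin_aut mu mui;
  cm_lin : tensor_linear rho;
  cm_coassoc : forall x (f1 f2 : H -> F) (f3 : M -> F),
    scalar f1 -> scalar f2 -> scalar f3 ->
    \sum_(p <- rho x) \sum_(q <- DH p.1) f1 q.1 * f2 q.2 * f3 (mui p.2)
    = \sum_(p <- rho x) \sum_(q <- rho p.2) f1 (ai p.1) * f2 q.1 * f3 q.2;
  cm_morph : forall x (f1 : H -> F) (f2 : M -> F), scalar f1 -> scalar f2 ->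
    \sum_(p <- rho (mu x)) f1 p.1 * f2 p.2 = \sum_(p <- rho x) f1 (a p.1) * f2 (mu p.2);
  cm_counit : forall x, \sum_(p <- rho x) eH p.1 *: p.2 = mui x }.

Record hom_comodule_coalgebra (H C : lmodType F) (mulH : H -> H -> H) (oneH : H)
    (DH : H -> seq (H * H)) (eH : H -> F) (a ai : H -> H)
    (DC : C -> seq (C * C)) (eC : C -> F) (b bi : C -> C)
    (rho : C -> seq (H * C)) : Prop := {
  cc_comod : hom_comodule DH eH a ai rho b bi;
  cc_cop : forall x (f1 : H -> F) (f2 f3 : C -> F),
    scalar f1 -> scalar f2 -> scalar f3 ->
    \sum_(p <- rho x) \sum_(q <- DC p.2) f1 p.1 * f2 q.1 * f3 q.2
    = \sum_(p <- DC x) \sum_(q <- rho p.1) \sum_(r <- rho p.2)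
        f1 (mulH q.1 r.1) * f2 q.2 * f3 r.2;
  cc_eps : forall x, \sum_(p <- rho x) eC p.2 *: p.1 = eC x *: oneH }.

Definition conv_invertible (H C : lmodType F) (DH : H -> seq (H * H))
    (eH : H -> F) (mulC : C -> C -> C) (oneC : C) (sigma : H -> H -> C) :=
  exists sigmai : H -> H -> C, bilinear_map sigmai /\
    forall h l,
      \sum_(p <- DH h) \sum_(q <- DH l) mulC (sigma p.1 q.1) (sigmai p.2 q.2)
        = (eH h * eH l) *: oneC /\
      \sum_(p <- DH h) \sum_(q <- DH l) mulC (sigmai p.1 q.1) (sigma p.2 q.2)
        = (eH h * eH l) *: oneC.

End Basic.

Section Crossed.
Variables (F : fieldType) (H C : lmodType F).
Variables (mulH : H -> H -> H) (oneH : H) (DH : H -> seq (H * H)) (eH : H -> F)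
  (al ali : H -> H).
Variables (mulC : C -> C -> C) (oneC : C) (DC : C -> seq (C * C)) (eC : C -> F)
  (be bei : C -> C).
Variables (act : H -> C -> C) (rho : C -> seq (H * C)) (sigma : H -> H -> C)
  (m k : int).

Local Notation A n := (zit al ali n).
Local Notation B n := (zit be bei n).

(* (a (x) h)(b (x) g) =
   a[(al^m(h11) -> be^-2(b)) sigma(al^(k+1)(h12), al^k(g1))] (x) al(h2 g2) *)
Definition mulX1 (p q : C * H) : seq (C * H) :=
  flatten [seq [seq (mulC p.1 (mulC (act (A m r.1) (B (-2) q.1))
                                   (sigma (A (k + 1) r.2) (A k s.1))),
                     al (mulH t.2 s.2)) | r <- DH t.1, s <- DH q.2]
          | t <- DH p.2].
Definition mulX (x y : seq (C * H)) : seq (C * H) :=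
  flatten [seq mulX1 p q | p <- x, q <- y].
Definition oneX : seq (C * H) := [:: (oneC, oneH)].
Definition xi1 (p : C * H) : C * H := (be p.1, al p.2).
Definition xii1 (p : C * H) : C * H := (bei p.1, ali p.2).
Definition xiX (x : seq (C * H)) := map xi1 x.
Definition xiiX (x : seq (C * H)) := map xii1 x.
(* Delta(a (x) h) = a1 (x) al^m(a2_(-1)) al^-1(h1) (x) be(a2_(0)) (x) h2 *)
Definition copX1 (p : C * H) : seq ((C * H) * (C * H)) :=
  flatten [seq [seq ((q.1, mulH (A m r.1) (ali t.1)), (be r.2, t.2))
               | r <- rho q.2, t <- DH p.2] | q <- DC p.1].
Definition copX (x : seq (C * H)) := flatten (map copX1 x).
Definition epsX1 (p : C * H) : F := eC p.1 * eH p.2.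
Definition epsX (x : seq (C * H)) : F := \sum_(p <- x) epsX1 p.
Definition evX (f : C -> F) (g : H -> F) (p : C * H) : F := f p.1 * g p.2.
Definition teqX (x y : seq (C * H)) :=
  forall (f : C -> F) (g : H -> F), scalar f -> scalar g ->
    \sum_(p <- x) evX f g p = \sum_(p <- y) evX f g p.

(* (X, xi) with the above structure is a monoidal Hom-bialgebra.
   (xi = be (x) al is automatically a linear automorphism, and the
   structure maps are linear by construction.) *)
Record X_hom_bialgebra : Prop := {
  xa_assoc : forall x y z, teqX (mulX (xiX x) (mulX y z)) (mulX (mulX x y) (xiX z));
  xa_morph : forall x y, teqX (xiX (mulX x y)) (mulX (xiX x) (xiX y));
  xa_unitr : forall x, teqX (mulX x oneX) (xiX x);
  xa_unitl : forall x, teqX (mulX oneX x) (xiX x);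
  xa_one : teqX (xiX oneX) oneX;
  xc_coassoc : forall x (f1 f2 f3 : C -> F) (g1 g2 g3 : H -> F),
    scalar f1 -> scalar f2 -> scalar f3 -> scalar g1 -> scalar g2 -> scalar g3 ->
    \sum_(p <- copX x) \sum_(q <- copX1 p.2)
       evX f1 g1 (xii1 p.1) * evX f2 g2 q.1 * evX f3 g3 q.2
    = \sum_(p <- copX x) \sum_(q <- copX1 p.1)
       evX f1 g1 q.1 * evX f2 g2 q.2 * evX f3 g3 (xii1 p.2);
  xc_copmorph : forall x (f1 f2 : C -> F) (g1 g2 : H -> F),
    scalar f1 -> scalar f2 -> scalar g1 -> scalar g2 ->
    \sum_(p <- copX (xiX x)) evX f1 g1 p.1 * evX f2 g2 p.2
    = \sum_(p <- copX x) evX f1 g1 (xi1 p.1) * evX f2 g2 (xi1 p.2);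
  xc_counitr : forall x,
    teqX [seq (epsX1 p.2 *: p.1.1, p.1.2) | p <- copX x] (xiiX x);
  xc_counitl : forall x,
    teqX [seq (epsX1 p.1 *: p.2.1, p.2.2) | p <- copX x] (xiiX x);
  xc_epsmorph : forall x, epsX (xiX x) = epsX x;
  xb_copmul : forall x y (f1 f2 : C -> F) (g1 g2 : H -> F),
    scalar f1 -> scalar f2 -> scalar g1 -> scalar g2 ->
    \sum_(p <- copX (mulX x y)) evX f1 g1 p.1 * evX f2 g2 p.2
    = \sum_(p <- copX x) \sum_(q <- copX y)
        \sum_(u <- mulX1 p.1 q.1) \sum_(v <- mulX1 p.2 q.2)
          evX f1 g1 u * evX f2 g2 v;
  xb_copone : forall (f1 f2 : C -> F) (g1 g2 : H -> F),
    scalar f1 -> scalar f2 -> scalar g1 -> scalar g2 ->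
    \sum_(p <- copX oneX) evX f1 g1 p.1 * evX f2 g2 p.2
    = evX f1 g1 (oneC, oneH) * evX f2 g2 (oneC, oneH);
  xb_epsmul : forall x y, epsX (mulX x y) = epsX x * epsX y;
  xb_epsone : epsX oneX = 1 }.

(* phi^l(l (x) (a (x) h)) =
   (al(l11) -> be^-1(a)) sigma(al^(k+2-m)(l12), al^(k+1)(h1))
     (x) al^(1-m)(l2) al(h2) *)
Definition phil1 (l : H) (p : C * H) : seq (C * H) :=
  flatten [seq [seq (mulC (act (al r.1) (bei p.1))
                          (sigma (A (k + 2 - m) r.2) (A (k + 1) s.1)),
                     mulH (A (1 - m) t.2) (al s.2)) | r <- DH t.1, s <- DH p.2]
          | t <- DH l].
Definition phil (l : H) (x : seq (C * H)) : seq (C * H) := flatten (map (phil1 l) x).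
(* phi^r((a (x) h) (x) l) =
   a sigma(al^(k+1)(h1), al^(k+1-m)(l1)) (x) al(h2) al^(1-m)(l2) *)
Definition phir1 (p : C * H) (l : H) : seq (C * H) :=
  [seq (mulC p.1 (sigma (A (k + 1) s.1) (A (k + 1 - m) t.1)),
        mulH (al s.2) (A (1 - m) t.2)) | s <- DH p.2, t <- DH l].
Definition phir (x : seq (C * H)) (l : H) : seq (C * H) :=
  flatten (map (phir1^~ l) x).

Definition weak_hom_bimodule : Prop :=
  (forall x, teqX (phil oneH x) (xiX x) /\ teqX (phir x oneH) (xiX x)) /\
  (forall l g x, teqX (phil (al l) (phir x g)) (phir (phil l x) (al g))).

End Crossed.

(* Main.v *)
Require Import Defs.
From mathcomp Require Import all_boot all_algebra.
From mathcomp Require Import boolp classical_sets zify.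
From Stdlib Require Import ClassicalEpsilon.
Local Open Scope ring_scope.

Module Aux.
Set Implicit Arguments.
Unset Strict Implicit.
Unset Printing Implicit Defensive.
Import GRing.Theory.
Local Open Scope ring_scope.


Section Sep.
Variable F : fieldType.

Lemma sep_point (V : lmodType F) (v : V) : v != 0 ->
  exists f : V -> F, scalar f /\ f v = 1.
Proof.
move=> v0.
pose clo (A : set V) := forall x y (a : F), A x -> A y -> A (a *: x + y).
pose P := fun A : set V => clo A /\ ~ A v.
have [A [[cA nAv] maxA]] : exists A, P A /\ forall B, (A `<` B)%classic -> ~ P B.
  apply: Zorn_bigcup => Fam FP tot; split.
    move=> x y a [X FX Xx] [Y FY Yy].
    have [XY|YX] := tot X Y FX FY.
      by exists Y => //; apply: (FP Y FY).1 => //; exact: XY.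
    by exists X => //; apply: (FP X FX).1 => //; exact: YX.
  by move=> [X FX Xv]; exact: (FP X FX).2.
have A0 : A 0.
  apply: contrapT => nA0.
  have Aempty : forall x, ~ A x.
    move=> x Ax; apply: nA0; have := cA x x (-1) Ax Ax.
    by rewrite scaleN1r addNr.
  apply: (maxA (fun x => x = 0)).
    split; first by move=> x /Aempty.
    by move=> /(_ 0 erefl).
  split; first by move=> x y a -> ->; rewrite scaler0 addr0.
  by move=> /= v00; move: v0; rewrite v00 eqxx.
have Aopp : forall x, A x -> A (- x).
  by move=> x Ax; have := cA x 0 (-1) Ax A0; rewrite addr0 scaleN1r.
have Aadd : forall x y, A x -> A y -> A (x + y).
  by move=> x y Ax Ay; have := cA x y 1 Ax Ay; rewrite scale1r.
have Ascale : forall x a, A x -> A (a *: x).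
  by move=> x a Ax; have := cA x 0 a Ax A0; rewrite addr0.
have ex : forall u, exists c : F, A (u - c *: v).
  move=> u.
  pose A' := fun w => exists a c, A a /\ w = a + c *: u.
  have cA' : clo A'.
    move=> x y b [a1 [c1 [Aa1 ->]]] [a2 [c2 [Aa2 ->]]].
    exists (b *: a1 + a2), (b * c1 + c2); split; first exact: cA.
    by rewrite scalerDr scalerDl scalerA; rewrite !addrA; congr (_ + _);
      rewrite -!addrA; congr (_ + _); rewrite addrC.
  have [A'v|nA'v] := pselect (A' v).
    case: A'v => a [c [Aa vE]].
    have c0 : c != 0.
      apply/eqP => c0; apply: nAv; move: vE; rewrite c0 scale0r addr0 => ->//.
    exists c^-1; have -> : u - c^-1 *: v = - (c^-1 *: a).
      by rewrite vE scalerDr scalerA mulVf // scale1r opprD addrCA subrr addr0.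
    exact/Aopp/Ascale.
  have AA' : (A `<=` A')%classic by move=> x Ax; exists x, 0; rewrite scale0r addr0.
  have [AA'eq|] := pselect ((A' `<=` A)%classic).
    exists 0; rewrite scale0r subr0; apply: AA'eq; exists 0, 1.
    by rewrite add0r scale1r.
  by move=> nA'A; exfalso; apply: (maxA A') => //; split.
have uniq : forall u c d, A (u - c *: v) -> A (u - d *: v) -> c = d.
  move=> u c d Ac Ad; apply: contrapT => cd.
  have dc0 : d - c != 0 by rewrite subr_eq0; apply/eqP => dc; apply: cd.
  have := Aadd _ _ Ac (Aopp _ Ad).
  have -> : u - c *: v + - (u - d *: v) = (d - c) *: v.
    by rewrite scalerBl opprB addrC addrA subrK.
  by move=> /(Ascale _ (d - c)^-1); rewrite scalerA mulVf ?scale1r.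
pose f u := proj1_sig (constructive_indefinite_description _ (ex u)).
have fP : forall u, A (u - f u *: v).
  by move=> u; rewrite /f; case: constructive_indefinite_description.
exists f; split.
  move=> a x y; apply: (uniq (a *: x + y)); first exact: fP.
  have := cA _ _ a (fP x) (fP y).
  suff -> : a *: (x - f x *: v) + (y - f y *: v) = a *: x + y - (a * f x + f y) *: v by [].
  by rewrite scalerBr scalerA scalerDl opprD addrACA.
by apply: (uniq v); [exact: fP | rewrite scale1r subrr].
Qed.

Section LinLemmas.
Variables (V U W : lmodType F).

Lemma lin0 (f : V -> U) : linear f -> f 0 = 0.
Proof.
move=> lf; have := lf 1 0 0; rewrite scaler0 addr0 scale1r => E.
by apply: (addrI (f 0)); rewrite addr0 -E.
Qed.
Lemma linD (f : V -> U) : linear f -> forall u v, f (u + v) = f u + f v.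
Proof. by move=> lf u v; rewrite -[u in LHS]scale1r lf scale1r. Qed.
Lemma linZ (f : V -> U) : linear f -> forall a u, f (a *: u) = a *: f u.
Proof. by move=> lf a u; rewrite -[_ *: u]addr0 lf lin0 // addr0. Qed.
Lemma linN (f : V -> U) : linear f -> forall u, f (- u) = - f u.
Proof. by move=> lf u; rewrite -scaleN1r linZ // scaleN1r. Qed.
Lemma lin_sum (f : V -> U) I (s : seq I) (G : I -> V) : linear f ->
  f (\sum_(i <- s) G i) = \sum_(i <- s) f (G i).
Proof.
move=> lf; elim: s => [|i s IH]; first by rewrite !big_nil lin0.
by rewrite !big_cons linD // IH.
Qed.

Lemma sc0 (f : V -> F) : scalar f -> f 0 = 0.
Proof.
move=> lf; have := lf 1 0 0; rewrite scaler0 addr0 mul1r => E.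
by apply: (addrI (f 0)); rewrite addr0 -E.
Qed.
Lemma scD (f : V -> F) : scalar f -> forall u v, f (u + v) = f u + f v.
Proof. by move=> lf u v; rewrite -[u in LHS]scale1r lf mul1r. Qed.
Lemma scZ (f : V -> F) : scalar f -> forall a u, f (a *: u) = a * f u.
Proof. by move=> lf a u; rewrite -[_ *: u]addr0 lf sc0 // addr0. Qed.
Lemma scN (f : V -> F) : scalar f -> forall u, f (- u) = - f u.
Proof. by move=> lf u; rewrite -scaleN1r scZ // mulN1r. Qed.
Lemma sc_sum (f : V -> F) I (s : seq I) (G : I -> V) : scalar f ->
  f (\sum_(i <- s) G i) = \sum_(i <- s) f (G i).
Proof.
move=> lf; elim: s => [|i s IH]; first by rewrite !big_nil sc0.
by rewrite !big_cons scD // IH.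
Qed.

Lemma lin_id : linear (fun x : V => x). Proof. by []. Qed.
Lemma lin_comp (g : U -> W) (f : V -> U) : linear g -> linear f ->
  linear (fun x => g (f x)).
Proof. by move=> lg lf a u v; rewrite lf lg. Qed.
Lemma sc_comp (g : U -> F) (f : V -> U) : scalar g -> linear f ->
  scalar (fun x => g (f x)).
Proof. by move=> lg lf a u v; rewrite lf lg. Qed.
Lemma sc_mulr (f : V -> F) c : scalar f -> scalar (fun x => f x * c).
Proof. by move=> lf a u v; rewrite lf mulrDl mulrA. Qed.
Lemma sc_mull (f : V -> F) c : scalar f -> scalar (fun x => c * f x).
Proof. by move=> lf a u v; rewrite lf mulrDr mulrCA. Qed.
Lemma sc_sumf I (s : seq I) (G : V -> I -> F) :
  (forall i, scalar (fun x => G x i)) -> scalar (fun x => \sum_(i <- s) G x i).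
Proof.
move=> lG a u v; elim: s => [|i s IH]; first by rewrite !big_nil mulr0 addr0.
by rewrite !big_cons IH lG mulrDr addrACA.
Qed.
Lemma lin_sumf I (s : seq I) (G : V -> I -> U) :
  (forall i, linear (fun x => G x i)) -> linear (fun x => \sum_(i <- s) G x i).
Proof.
move=> lG a u v; elim: s => [|i s IH]; first by rewrite !big_nil scaler0 addr0.
by rewrite !big_cons IH lG scalerDr addrACA.
Qed.
Lemma lin_scl (f : V -> F) (w : U) : scalar f -> linear (fun x => f x *: w).
Proof. by move=> lf a u v; rewrite lf scalerDl scalerA. Qed.
Lemma lin_scr (f : V -> U) (c : F) : linear f -> linear (fun x => c *: f x).
Proof. by move=> lf a u v; rewrite lf scalerDr !scalerA mulrC. Qed.
End LinLemmas.

Lemma lin_opl (V U1 U2 U3 : lmodType F) (op : U1 -> U2 -> U3) (f : V -> U1) w :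
  (forall w, linear (op^~ w)) -> linear f -> linear (fun x => op (f x) w).
Proof. by move=> lop lf; apply: (lin_comp (lop w) lf). Qed.
Lemma lin_opr (V U1 U2 U3 : lmodType F) (op : U1 -> U2 -> U3) (f : V -> U2) w :
  (forall w, linear (op w)) -> linear f -> linear (fun x => op w (f x)).
Proof. by move=> lop lf; apply: (lin_comp (lop w) lf). Qed.

Lemma point_eq (V : lmodType F) (u w : V) :
  (forall f : V -> F, scalar f -> f u = f w) -> u = w.
Proof.
move=> H; apply/eqP; rewrite -subr_eq0; apply/negP => /negP /sep_point [f [sf fuw]].
by move: fuw; rewrite scD // scN // (H f sf) subrr => /eqP; rewrite eq_sym oner_eq0.
Qed.

Section Tensor.
Variables (V W : lmodType F).

Definition teq2 (L L' : seq (V * W)) := forall (f : V -> F) (g : W -> F),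
  scalar f -> scalar g ->
  \sum_(p <- L) f p.1 * g p.2 = \sum_(p <- L') f p.1 * g p.2.

Definition bil (B : V -> W -> F) :=
  (forall v, scalar (B v)) /\ (forall w, scalar (B^~ w)).

Lemma tensor_zero (L : seq (V * W)) :
  (forall f : V -> F, scalar f -> \sum_(p <- L) f p.1 *: p.2 = 0) ->
  forall B, bil B -> \sum_(p <- L) B p.1 p.2 = 0.
Proof.
move=> H B [B1 B2].
move Hn : (size L) => n; elim: n L Hn H => [|n IH] [|[v1 w1] L] //=.
  by rewrite big_nil.
move=> [Hn] H.
have H0 := H.
have HL : forall f, scalar f -> \sum_(p <- L) f p.1 *: p.2 = - (f v1 *: w1).
  move=> f sf; have := H f sf; rewrite big_cons /= => /eqP.
  by rewrite addrC addr_eq0 => /eqP.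
rewrite big_cons /=.
have [v10|v10] := eqVneq v1 0.
  rewrite v10 (sc0 (B2 w1)) add0r; apply: IH => // f sf.
  by rewrite HL // v10 (sc0 sf) scale0r oppr0.
have [f0 [sf0 f0v]] := sep_point v10.
pose L'' := [seq (p.1 - f0 p.1 *: v1, p.2) | p <- L].
have E : \sum_(p <- L) B p.1 p.2 =
   \sum_(p <- L'') B p.1 p.2 + B v1 (\sum_(p <- L) f0 p.1 *: p.2).
  rewrite big_map sc_sum // -big_split /=; apply: eq_bigr => p _.
  rewrite scZ // -(scZ (B2 p.2)).
  have := B2 p.2 1 (p.1 - f0 p.1 *: v1) (f0 p.1 *: v1).
  by rewrite mul1r scale1r subrK.
rewrite E IH ?size_map //.
  by rewrite HL // f0v scale1r add0r (scN (B1 v1)) subrr.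
move=> g sg; rewrite big_map /=.
under eq_bigr do rewrite scD // scN // scZ // scalerDl scaleNr.
rewrite big_split /= sumrN HL //.
under eq_bigr do rewrite mulrC -scalerA.
by rewrite -scaler_sumr HL // f0v scale1r scalerN opprK addNr.
Qed.

Lemma teq2_bil (L L' : seq (V * W)) : teq2 L L' ->
  forall B, bil B -> \sum_(p <- L) B p.1 p.2 = \sum_(p <- L') B p.1 p.2.
Proof.
move=> H B bB; apply/eqP; rewrite -subr_eq0; apply/eqP.
have Hf : forall f : V -> F, scalar f ->
    \sum_(p <- L ++ [seq (- p.1, p.2) | p <- L']) f p.1 *: p.2 = 0.
  move=> f sf; rewrite big_cat big_map /=.
  under [X in _ + X = _]eq_bigr do rewrite scN // scaleNr.
  rewrite sumrN; apply/eqP; rewrite subr_eq0; apply/eqP.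
  apply: point_eq => g sg; rewrite !sc_sum //.
  under eq_bigr do rewrite scZ //.
  under [RHS]eq_bigr do rewrite scZ //.
  exact: H.
have := tensor_zero Hf bB; rewrite big_cat big_map /=.
under [X in _ + X = _ -> _]eq_bigr do rewrite (scN (bB.2 _)).
by rewrite sumrN.
Qed.

End Tensor.

End Sep.


Section Zit.
Variables (T : Type) (f fi : T -> T).
Hypotheses (fK : cancel f fi) (fiK : cancel fi f).
Local Notation Z n := (zit f fi n).

Lemma zit0 x : Z 0 x = x. Proof. by []. Qed.
Lemma zit1 x : Z 1 x = f x. Proof. by []. Qed.
Lemma zitN1 x : Z (-1) x = fi x. Proof. by []. Qed.

Lemma zitS n x : Z (n + 1) x = f (Z n x).
Proof.
case: n => [n|n].
  have -> : Posz n + 1 = Posz n.+1 by lia.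
  by [].
case: n => [|n].
  have -> : Negz 0 + 1 = 0 by lia.
  by rewrite /= fiK.
have -> : Negz n.+1 + 1 = Negz n by lia.
by rewrite /= fiK.
Qed.

Lemma zitP n x : Z (n - 1) x = fi (Z n x).
Proof.
case: n => [n|n]; last first.
  have -> : Negz n - 1 = Negz n.+1 by lia.
  by [].
case: n => [|n].
  by have -> : Posz 0 - 1 = Negz 0 by lia.
have -> : Posz n.+1 - 1 = Posz n by lia.
by rewrite /= fK.
Qed.

Lemma zitD n n' x : Z (n + n') x = Z n (Z n' x).
Proof.
elim/int_rect: n x => [|n IH|n IH] x.
- by rewrite add0r.
- have -> : (n.+1%:Z + n') = (n%:Z + n') + 1 by lia.
  by rewrite zitS IH -zitS; congr (Z _ _); lia.
- have -> : (- n.+1%:Z + n') = (- n%:Z + n') - 1 by lia.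
  by rewrite zitP IH -zitP; congr (Z _ _); lia.
Qed.

Lemma zitK n x : Z (- n) (Z n x) = x.
Proof. by rewrite -zitD addNr. Qed.
Lemma zitKV n x : Z n (Z (- n) x) = x.
Proof. by rewrite -zitD addrN. Qed.

Lemma zit_fcomm n x : f (Z n x) = Z n (f x).
Proof. by rewrite -zit1 -zitD addrC zitD. Qed.
Lemma zit_ficomm n x : fi (Z n x) = Z n (fi x).
Proof. by rewrite -zitN1 -zitD addrC zitD. Qed.

Lemma zit_fix c : f c = c -> forall n, Z n c = c.
Proof.
move=> fc n; elim/int_rect: n => [//|n IH|n IH].
  by rewrite (_ : n.+1%:Z = n%:Z + 1) ?zitS ?IH //; lia.
rewrite (_ : - n.+1%:Z = - n%:Z - 1) ?zitP ?IH //; last by lia.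
by rewrite -{1}fc fK.
Qed.

Lemma zit_inv (U : Type) (g : T -> U) : (forall x, g (f x) = g x) ->
  forall n x, g (Z n x) = g x.
Proof.
move=> gf n; elim/int_rect: n => [//|n IH|n IH] x.
  by rewrite (_ : n.+1%:Z = n%:Z + 1) ?zitS ?gf ?IH //; lia.
rewrite (_ : - n.+1%:Z = - n%:Z - 1) ?zitP; last by lia.
by rewrite -gf fiK IH.
Qed.
End Zit.

Lemma zit_lin (F : fieldType) (V : lmodType F) (f fi : V -> V) :
  lin_aut f fi -> forall n, linear (zit f fi n).
Proof.
move=> [lf fK fiK].
have lfi : linear fi.
  by move=> a u v; apply: (can_inj fK); rewrite lf !fiK.
have iterl : forall (g : V -> V), linear g -> forall n, linear (iter n g).
  move=> g lg; elim=> [|n IH] a u v //=.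
  by rewrite IH lg.
by case=> n /=; apply: iterl.
Qed.


Section GForm.
Variable F : fieldType.
Variables (V W : lmodType F).

Definition bilG (G : V * W -> F) :=
  (forall v, scalar (fun w => G (v, w))) /\ (forall w, scalar (fun v => G (v, w))).

Lemma teq2_bilG (L L' : seq (V * W)) : teq2 L L' ->
  forall G, bilG G -> \sum_(p <- L) G p = \sum_(p <- L') G p.
Proof.
move=> H G [G1 G2].
have E : forall L0 : seq (V * W), \sum_(p <- L0) G p = \sum_(p <- L0) G (p.1, p.2).
  by move=> L0; apply: eq_bigr => -[].
rewrite E (E L'); apply: (teq2_bil H (B := fun x y => G (x, y))); split.
  exact: G1.
exact: G2.
Qed.

Lemma pairG (U : lmodType F) (D : U -> seq (V * W)) : tensor_linear D ->
  forall G, bilG G -> scalar (fun u => \sum_(p <- D u) G p).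
Proof.
move=> TL G bG a u w.
have T : teq2 (D (a *: u + w)) ([seq (a *: p.1, p.2) | p <- D u] ++ D w).
  move=> f g sf sg; rewrite (TL f g sf sg a u w) big_cat big_map /=.
  by congr (_ + _); rewrite mulr_sumr; apply: eq_bigr => p _; rewrite scZ // mulrA.
rewrite (teq2_bilG T bG) big_cat big_map /=; congr (_ + _).
rewrite mulr_sumr; apply: eq_bigr => -[x y] _ /=.
by rewrite (scZ (bG.2 y)).
Qed.
End GForm.

Section Main.
Variables (F : fieldType) (H C : lmodType F) (m k : int)
  (mulH : H -> H -> H) (oneH : H) (DH : H -> seq (H * H)) (eH : H -> F)
  (al ali : H -> H)
  (mulC : C -> C -> C) (oneC : C) (DC : C -> seq (C * C)) (eC : C -> F)
  (be bei : C -> C)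
  (act : H -> C -> C) (rho : C -> seq (H * C)) (sigma : H -> H -> C).
Hypotheses (HB : hom_bialgebra mulH oneH DH eH al ali)
  (HAC : hom_algebra mulC oneC be bei)
  (WM : weak_module_algebra DH eH mulC oneC act)
  (Sb : bilinear_map sigma)
  (XB : X_hom_bialgebra mulH oneH DH eH al ali mulC oneC DC eC be bei act rho sigma m k).

Local Notation A n := (zit al ali n).
Local Notation Bz n := (zit be bei n).
Local Notation mulX := (mulX mulH DH al ali mulC be bei act sigma m k).
Local Notation mulX1 := (mulX1 mulH DH al ali mulC be bei act sigma m k).
Local Notation xiX := (xiX al be).
Local Notation phil1 := (phil1 mulH DH al ali mulC bei act sigma m k).
Local Notation phir1 := (phir1 mulH DH al ali mulC sigma m k).
Local Notation phil := (phil mulH DH al ali mulC bei act sigma m k).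
Local Notation phir := (phir mulH DH al ali mulC sigma m k).
Local Notation oneX := (oneX oneH oneC).
Local Notation teqX := (@teqX F H C).

Let alaut : lin_aut al ali := ha_aut (hb_alg HB).
Let alK : cancel al ali := let: And3 _ x _ := alaut in x.
Let aliK : cancel ali al := let: And3 _ _ x := alaut in x.
Let lal : linear al := let: And3 x _ _ := alaut in x.
Let beaut : lin_aut be bei := ha_aut HAC.
Let beK : cancel be bei := let: And3 _ x _ := beaut in x.
Let beiK : cancel bei be := let: And3 _ _ x := beaut in x.
Let lbe : linear be := let: And3 x _ _ := beaut in x.
Let lA n : linear (A n) := zit_lin alaut n.
Let lB n : linear (Bz n) := zit_lin beaut n.
Let lali : linear ali := lA (-1).
Let lbei : linear bei := lB (-1).
Let DHlin : tensor_linear DH := hc_cop (hb_coalg HB).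
Let seH : scalar eH := hc_eps (hb_coalg HB).
Let mulHl : forall w, linear (mulH^~ w) := (ha_mul (hb_alg HB)).2.
Let mulHr : forall w, linear (mulH w) := (ha_mul (hb_alg HB)).1.
Let mulCl : forall w, linear (mulC^~ w) := (ha_mul HAC).2.
Let mulCr : forall w, linear (mulC w) := (ha_mul HAC).1.
Let actl : forall w, linear (act^~ w) := (wm_lin WM).2.
Let actr : forall w, linear (act w) := (wm_lin WM).1.
Let sigl : forall w, linear (sigma^~ w) := Sb.2.
Let sigr : forall w, linear (sigma w) := Sb.1.

Let zS n x : A (n + 1) x = al (A n x). Proof. by apply: zitS. Qed.
Let zP n x : A (n - 1) x = ali (A n x). Proof. by apply: zitP. Qed.
Let zD n n' x : A (n + n') x = A n (A n' x). Proof. by apply: zitD. Qed.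
Let bzS n x : Bz (n + 1) x = be (Bz n x). Proof. by apply: zitS. Qed.
Let bzP n x : Bz (n - 1) x = bei (Bz n x). Proof. by apply: zitP. Qed.
Let bzD n n' x : Bz (n + n') x = Bz n (Bz n' x). Proof. by apply: zitD. Qed.

Ltac lin_step :=
  first [ assumption
        | apply: lin_id
        | apply: sc_sumf => ?
        | apply: lin_sumf => ?
        | apply: pairG; [exact: DHlin | split => ? /=]
        | apply: sc_mulr
        | apply: sc_mull
        | apply: lin_scr
        | apply: lin_scl
        | apply: lin_opl; [assumption|]
        | apply: lin_opr; [assumption|]
        | apply: sc_comp; [first [assumption | exact: seH] |]
        | apply: lin_comp; [first [assumption | exact: lA | exact: lB] |] ].
Ltac lin_tac := repeat lin_step.


Lemma cop_al x f g : scalar f -> scalar g ->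
  \sum_(p <- DH (al x)) f p.1 * g p.2 = \sum_(p <- DH x) f (al p.1) * g (al p.2).
Proof. exact: (hc_copmorph (hb_coalg HB)). Qed.

Lemma cop_ali x f g : scalar f -> scalar g ->
  \sum_(p <- DH (ali x)) f p.1 * g p.2 = \sum_(p <- DH x) f (ali p.1) * g (ali p.2).
Proof.
move=> sf sg; rewrite -{2}(aliK x).
rewrite (@cop_al (ali x) (fun y => f (ali y)) (fun y => g (ali y))); last 2 first.
- exact: sc_comp.
- exact: sc_comp.
by apply: eq_bigr => p _; rewrite !alK.
Qed.

Lemma cop_A n x f g : scalar f -> scalar g ->
  \sum_(p <- DH (A n x)) f p.1 * g p.2 = \sum_(p <- DH x) f (A n p.1) * g (A n p.2).
Proof.
elim/int_rect: n x f g => [|n IH|n IH] x f g sf sg.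
- by [].
- rewrite (_ : n.+1%:Z = n%:Z + 1); last by lia.
  rewrite zS cop_al // (IH _ (fun y => f (al y)) (fun y => g (al y))); try exact: sc_comp.
  by apply: eq_bigr => p _; rewrite -!zS.
- rewrite (_ : - n.+1%:Z = - n%:Z - 1); last by lia.
  rewrite zP cop_ali // (IH _ (fun y => f (ali y)) (fun y => g (ali y))); try exact: sc_comp.
  by apply: eq_bigr => p _; rewrite -!zP.
Qed.

Lemma copG n x G : bilG G ->
  \sum_(p <- DH (A n x)) G p = \sum_(p <- DH x) G (A n p.1, A n p.2).
Proof.
move=> bG.
have T : teq2 (DH (A n x)) [seq (A n p.1, A n p.2) | p <- DH x].
  by move=> f g sf sg; rewrite big_map cop_A.
by rewrite (teq2_bilG T bG) big_map.
Qed.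

Lemma counitr_lin (U : lmodType F) (Psi : H -> U) c : linear Psi ->
  \sum_(p <- DH c) eH p.2 *: Psi p.1 = Psi (ali c).
Proof.
move=> lP; rewrite -(hc_counitr (hb_coalg HB)) lin_sum //.
by apply: eq_bigr => p _; rewrite linZ.
Qed.
Lemma counitl_lin (U : lmodType F) (Psi : H -> U) c : linear Psi ->
  \sum_(p <- DH c) eH p.1 *: Psi p.2 = Psi (ali c).
Proof.
move=> lP; rewrite -(hc_counitl (hb_coalg HB)) lin_sum //.
by apply: eq_bigr => p _; rewrite linZ.
Qed.
Lemma counitr_sc (Psi : H -> F) c : scalar Psi ->
  \sum_(p <- DH c) eH p.2 * Psi p.1 = Psi (ali c).
Proof.
move=> lP; rewrite -(hc_counitr (hb_coalg HB)) sc_sum //.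
by apply: eq_bigr => p _; rewrite scZ.
Qed.
Lemma counitl_sc (Psi : H -> F) c : scalar Psi ->
  \sum_(p <- DH c) eH p.1 * Psi p.2 = Psi (ali c).
Proof.
move=> lP; rewrite -(hc_counitl (hb_coalg HB)) sc_sum //.
by apply: eq_bigr => p _; rewrite scZ.
Qed.


Let epsal x : eH (al x) = eH x := hc_epsmorph (hb_coalg HB) x.
Let epsmul x y : eH (mulH x y) = eH x * eH y := hb_epsmul HB x y.

Lemma sum_mulX1 (U : nmodType) (G : C * H -> U) p q :
  \sum_(u <- mulX1 p q) G u =
  \sum_(t <- DH p.2) \sum_(r <- DH t.1) \sum_(s <- DH q.2)
     G (mulC p.1 (mulC (act (A m r.1) (Bz (-2) q.1)) (sigma (A (k + 1) r.2) (A k s.1))),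
        al (mulH t.2 s.2)).
Proof.
rewrite /Defs.mulX1 big_flatten big_map; apply: eq_bigr => t _.
by rewrite big_allpairs_dep.
Qed.

Lemma sum_mulX (U : nmodType) (G : C * H -> U) x y :
  \sum_(u <- mulX x y) G u =
  \sum_(p <- x) \sum_(q <- y) \sum_(u <- mulX1 p q) G u.
Proof.
by rewrite /Defs.mulX big_flatten big_allpairs_dep.
Qed.

Definition proj (z : seq (C * H)) : C := \sum_(p <- z) eH p.2 *: p.1.

Lemma teqX_proj z z' : teqX z z' -> proj z = proj z'.
Proof.
move=> T; apply: point_eq => f sf; rewrite /proj !sc_sum //.
have := T f eH sf seH; rewrite /evX => E.
rewrite (eq_bigr (fun p => f p.1 * eH p.2)); last by move=> p _; rewrite scZ // mulrC.
by rewrite E; apply: eq_bigr => p _; rewrite scZ // mulrC.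
Qed.

Lemma proj_xi z : proj (xiX z) = be (proj z).
Proof.
rewrite /proj big_map lin_sum //; apply: eq_bigr => p _.
by rewrite /= epsal linZ.
Qed.

Lemma projmul a h b g : proj (mulX1 (a, h) (b, g)) =
  \sum_(t <- DH h) eH t.2 *: \sum_(r <- DH t.1)
     mulC a (mulC (act (A m r.1) (Bz (-2) b)) (sigma (A (k + 1) r.2) (A k (ali g)))).
Proof.
rewrite /proj sum_mulX1 /=; apply: eq_bigr => t _.
rewrite scaler_sumr; apply: eq_bigr => r _.
under eq_bigr do rewrite /= epsal epsmul -scalerA.
rewrite -scaler_sumr; congr (_ *: _).
by rewrite (counitr_lin (Psi := fun y => mulC a (mulC (act (A m r.1) (Bz (-2) b))
   (sigma (A (k + 1) r.2) (A k y))))) //; lin_tac.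
Qed.


Let be1 : be oneC = oneC := ha_one HAC.
Let al1 : al oneH = oneH := ha_one (hb_alg HB).
Let ali1 : ali oneH = oneH. Proof. by rewrite -{1}al1 alK. Qed.
Let bei1 : bei oneC = oneC. Proof. by rewrite -{1}be1 beK. Qed.
Let mul1C x : mulC oneC x = be x := ha_unitl HAC x.
Let mulC1 x : mulC x oneC = be x := ha_unitr HAC x.
Let beM x y : be (mulC x y) = mulC (be x) (be y) := ha_morph HAC x y.
Let alM x y : al (mulH x y) = mulH (al x) (al y) := ha_morph (hb_alg HB) x y.
Let act1 h : act h oneC = eH h *: oneC := wm_one WM h.
Let A1 n : A n oneH = oneH. Proof. by apply: zit_fix. Qed.
Let B1 n : Bz n oneC = oneC. Proof. by apply: zit_fix. Qed.
Let epsA n x : eH (A n x) = eH x. Proof. by apply: zit_inv. Qed.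
Let aliA x : ali x = A (-1) x. Proof. by []. Qed.
Let alA x : al x = A 1 x. Proof. by []. Qed.
Let beiB x : bei x = Bz (-1) x. Proof. by []. Qed.
Let beB x : be x = Bz 1 x. Proof. by []. Qed.
Let Aeq n n' x : n = n' -> A n x = A n' x. Proof. by move=> ->. Qed.
Let Beq n n' x : n = n' -> Bz n x = Bz n' x. Proof. by move=> ->. Qed.

Lemma mulX_11 p q : mulX [:: p] [:: q] = mulX1 p q.
Proof. by rewrite /Defs.mulX /= cats0. Qed.

Lemma proj1 c h : proj [:: (c, h)] = eH h *: c.
Proof. by rewrite /proj big_cons big_nil addr0. Qed.

Lemma S2 y : sigma y oneH = eH y *: oneC.
Proof.
have := teqX_proj (xa_unitr XB [:: (oneC, A (1 - k) y)]).
rewrite mulX_11 projmul /xiX /= proj1 epsal epsA be1 !bei1 ali1 A1.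
under eq_bigr do under eq_bigr do
  rewrite act1 epsA (linZ (mulCl _)) (linZ (mulCr _)) !mul1C.
have lP : linear (fun y => be (be (sigma (A (k + 1) y) oneH))) by lin_tac.
under eq_bigr do rewrite (counitl_lin _ lP).
have lP' : linear (fun x => be (be (sigma (A (k + 1) (ali x)) oneH))) by lin_tac.
rewrite (counitr_lin _ lP').
rewrite !aliA -!zD (Aeq _ (_ : _ = 0)); last by lia.
move=> E; apply: (can_inj beK); apply: (can_inj beK).
by rewrite E !(linZ lbe) !be1.
Qed.

Let Aeq0 n x : n = 0 -> A n x = x. Proof. by move=> ->. Qed.

Lemma PM11 h g : proj (mulX1 (oneC, h) (oneC, g)) =
  be (be (sigma (A (k - 1) h) (A (k - 1) g))).
Proof.
rewrite projmul /= !bei1.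
under eq_bigr do under eq_bigr do
  rewrite act1 epsA (linZ (mulCl _)) (linZ (mulCr _)) !mul1C.
have lP : linear (fun y => be (be (sigma (A (k + 1) y) (A k (ali g))))) by lin_tac.
under eq_bigr do rewrite (counitl_lin _ lP).
have lP' : linear (fun x => be (be (sigma (A (k + 1) (ali x)) (A k (ali g))))) by lin_tac.
rewrite (counitr_lin _ lP') !aliA -!zD.
by rewrite (Aeq _ (_ : _ = k - 1)) 1?(Aeq (A (-1) g) (_ : _ = k - 1)) //; lia.
Qed.

Lemma C1 x y : be (sigma x y) = sigma (al x) (al y).
Proof.
have := teqX_proj (xa_morph XB [:: (oneC, A (1 - k) x)] [:: (oneC, A (1 - k) y)]).
rewrite proj_xi /xiX /xi1 /= be1 !mulX_11 !PM11 !alA -!zD.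
have e0 : k - 1 + (1 - k) = 0 by lia.
have e1 : k - 1 + 1 + (1 - k) = 1 by lia.
rewrite e0 e1.
move=> E; apply: (can_inj beK); apply: (can_inj beK); exact: E.
Qed.

Lemma PMb1 h b : proj (mulX1 (oneC, h) (b, oneH)) =
  be (be (act (A m (ali (ali h))) (Bz (-2) b))).
Proof.
rewrite projmul ali1 A1.
under eq_bigr do under eq_bigr do
  rewrite S2 epsA (linZ (mulCr _)) mulC1 (linZ (mulCr _)) !mul1C.
have lP : linear (fun y => be (be (act (A m y) (Bz (-2) b)))) by lin_tac.
under eq_bigr do rewrite (counitr_lin _ lP).
have lP' : linear (fun x => be (be (act (A m (ali x)) (Bz (-2) b)))) by lin_tac.
by rewrite (counitr_lin _ lP').
Qed.

Lemma C2 u c : be (act u c) = act (al u) (be c).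
Proof.
have := teqX_proj (xa_morph XB [:: (oneC, A (2 - m) u)] [:: (be (be c), oneH)]).
rewrite proj_xi /xiX /xi1 /= be1 al1 !mulX_11 !PMb1 /= !beK !aliA !alA -!zD.
have e0 : m - 1 - 1 + (2 - m) = 0 by lia.
have e1 : m - 1 - 1 + 1 + (2 - m) = 1 by lia.
rewrite e0 e1.
move=> E; apply: (can_inj beK); apply: (can_inj beK); exact: E.
Qed.

Lemma sum_phil1 (U : nmodType) (G : C * H -> U) l p :
  \sum_(u <- phil1 l p) G u =
  \sum_(t <- DH l) \sum_(r <- DH t.1) \sum_(s <- DH p.2)
     G (mulC (act (al r.1) (bei p.1))
          (sigma (A (k + 2 - m) r.2) (A (k + 1) s.1)),
        mulH (A (1 - m) t.2) (al s.2)).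
Proof.
rewrite /Defs.phil1 big_flatten big_map; apply: eq_bigr => t _.
by rewrite big_allpairs_dep.
Qed.

Lemma phil1_mul l p : teqX (phil1 l p) (mulX1 (oneC, A (- m) l) p).
Proof.
move=> f g sf sg; rewrite /evX sum_phil1 sum_mulX1 /=.
under [RHS]eq_bigr do under eq_bigr do under eq_bigr do rewrite mul1C beM C2 C1 alM beiK.
rewrite copG; last by split=> ? /=; lin_tac.
apply: eq_bigr => t _ /=.
rewrite copG; last by split=> ? /=; lin_tac.
apply: eq_bigr => r _; apply: eq_bigr => s _ /=.
have zKV' n x : A n (A (- n) x) = x by apply: zitKV.
rewrite zKV' -!zS -zD.
have -> : k + 1 + 1 - m = k + 2 - m by lia.
by have -> : - m + 1 = 1 - m by lia.
Qed.

Lemma sum_phir1 (U : nmodType) (G : C * H -> U) p l :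
  \sum_(u <- phir1 p l) G u =
  \sum_(s <- DH p.2) \sum_(t <- DH l)
     G (mulC p.1 (sigma (A (k + 1) s.1) (A (k + 1 - m) t.1)),
        mulH (al s.2) (A (1 - m) t.2)).
Proof. by rewrite /Defs.phir1 big_allpairs_dep. Qed.

Lemma phir1_mul p l : teqX (phir1 p l) (mulX1 p (oneC, A (- m) l)).
Proof.
move=> f g sf sg; rewrite /evX sum_phir1 sum_mulX1 /=.
under [RHS]eq_bigr do under eq_bigr do under eq_bigr do
  rewrite !bei1 act1 epsA (linZ (mulCl _)) mul1C C1 (linZ (mulCr _)) (scZ sf) alM -mulrA.
apply: eq_bigr => t _.
under [RHS]eq_bigr do rewrite -mulr_sumr.
have sP : scalar (fun y => \sum_(s <- DH (A (- m) l))
   f (mulC p.1 (sigma (al (A (k + 1) y)) (al (A k s.1)))) * g (mulH (al t.2) (al s.2))).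
  by lin_tac.
rewrite (counitl_sc _ sP) copG; last by split=> ? /=; lin_tac.
apply: eq_bigr => s _ /=.
rewrite aliA -!zS -!zD.
have -> : k + 1 + 1 - 1 = k + 1 by lia.
by have -> : - m + 1 = 1 - m by lia.
Qed.

Lemma teqX_refl z : teqX z z. Proof. by []. Qed.
Lemma teqX_sym z z' : teqX z z' -> teqX z' z.
Proof. by move=> T f g sf sg; rewrite T. Qed.
Lemma teqX_trans z1 z2 z3 : teqX z1 z2 -> teqX z2 z3 -> teqX z1 z3.
Proof. by move=> T1 T2 f g sf sg; rewrite T1 ?T2. Qed.

Lemma sc_ext (V : lmodType F) (G1 G2 : V -> F) : (forall x, G1 x = G2 x) ->
  scalar G2 -> scalar G1.
Proof. by move=> E sG a u v; rewrite !E sG. Qed.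

Definition EE (l : H) := [:: (oneC, A (- m) l)].

Lemma phil_mul l x : teqX (phil l x) (mulX (EE l) x).
Proof.
move=> f g sf sg; rewrite sum_mulX big_cons big_nil addr0.
rewrite /Defs.phil big_flatten big_map; apply: eq_bigr => q _.
exact: phil1_mul.
Qed.

Lemma phir_mul x l : teqX (phir x l) (mulX x (EE l)).
Proof.
move=> f g sf sg; rewrite sum_mulX /Defs.phir big_flatten big_map.
apply: eq_bigr => p _; rewrite big_cons big_nil addr0.
exact: phir1_mul.
Qed.

Lemma mulX_congr_r y z z' : teqX z z' -> teqX (mulX y z) (mulX y z').
Proof.
move=> T f g sf sg; rewrite !sum_mulX; apply: eq_bigr => p _.
apply: (teq2_bilG T); split=> v.
  apply: sc_ext => [w|]; first by rewrite sum_mulX1.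
  by rewrite /evX /=; lin_tac.
apply: sc_ext => [w|]; first by rewrite sum_mulX1.
by rewrite /evX /=; lin_tac.
Qed.

Lemma mulX_congr_l y z z' : teqX z z' -> teqX (mulX z y) (mulX z' y).
Proof.
move=> T f g sf sg; rewrite !sum_mulX.
under eq_bigr do under eq_bigr do rewrite sum_mulX1.
under [RHS]eq_bigr do under eq_bigr do rewrite sum_mulX1.
apply: (teq2_bilG T); split=> v /=; rewrite /evX /=; lin_tac.
Qed.

Lemma bimod : weak_hom_bimodule mulH oneH DH al ali mulC be bei act sigma m k.
Proof.
have E1 : EE oneH = oneX by rewrite /EE A1.
have Exi l : xiX (EE l) = EE (al l).
  by rewrite /EE /xiX /xi1 /= be1; congr [:: (_, _)]; apply: zit_fcomm.
split.
  move=> x; split.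
    apply: teqX_trans (phil_mul _ _) _; rewrite E1; exact: (xa_unitl XB).
  apply: teqX_trans (phir_mul _ _) _; rewrite E1; exact: (xa_unitr XB).
move=> l g x.
apply: teqX_trans (phil_mul _ _) _.
apply: teqX_trans (mulX_congr_r _ (phir_mul _ _)) _.
rewrite -Exi.
apply: teqX_trans (xa_assoc XB _ _ _) _.
apply: teqX_trans (mulX_congr_l _ (teqX_sym (phil_mul _ _))) _.
rewrite Exi; exact: teqX_sym (phir_mul _ _).
Qed.

End Main.

End Aux.

Theorem lemma4p9 (F : fieldType) (H C : lmodType F) (m k : int)
  (mulH : H -> H -> H) (oneH : H) (DH : H -> seq (H * H)) (eH : H -> F)
  (al ali : H -> H)
  (mulC : C -> C -> C) (oneC : C) (DC : C -> seq (C * C)) (eC : C -> F)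
  (be bei : C -> C)
  (act : H -> C -> C) (rho : C -> seq (H * C)) (sigma : H -> H -> C) :
  hom_bialgebra mulH oneH DH eH al ali ->
  hom_algebra mulC oneC be bei ->
  hom_coalgebra DC eC be bei ->
  weak_module_algebra DH eH mulC oneC act ->
  hom_comodule_coalgebra mulH oneH DH eH al ali DC eC be bei rho ->
  bilinear_map sigma ->
  conv_invertible DH eH mulC oneC sigma ->
  X_hom_bialgebra mulH oneH DH eH al ali mulC oneC DC eC be bei act rho sigma m k ->
  weak_hom_bimodule mulH oneH DH al ali mulC be bei act sigma m k.
Proof.
move=> HB HAC _ WM _ Sb _ XB.
exact: (Aux.bimod HB HAC WM Sb XB).
Qed.
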